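(* Let $a>0$, $l>0$, $b,c\in\mathbb R$, and suppose there is $c_0>0$ with $(ak^2+bk+c)^{1/2}\ge l+c_0k$ for all integers $k\ge1$. Then $$\lim_{s\to0^+}\sum_{k=1}^\infty\left(\frac1{\big((ak^2+bk+c)^{1/2}-l\big)^s}-\frac1{\big((ak^2+bk+c)^{1/2}+l\big)^s}\right)=\frac{2l}{\sqrt a}.$$ *)

(* Defs.v *)
From Stdlib Require Import Reals.
From Coquelicot Require Import Coquelicot.
Open Scope R_scope.

Definition qroot (a b c : R) (k : nat) : R :=
  sqrt (a * (INR k) ^ 2 + b * INR k + c).

Definition summand (a b c l s : R) (k : nat) : R :=
  / Rpower (qroot a b c k - l) s - / Rpower (qroot a b c k + l) s.

(* Main.v *)
Require Import Defs.
From Stdlib Require Import Reals Lra Lia.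
From Coquelicot Require Import Coquelicot.
Open Scope R_scope.

Lemma ln_le_m1 r : 0 < r -> ln r <= r - 1.
Proof. intros h. generalize (exp_ineq1_le (ln r)). rewrite exp_ln; lra. Qed.

Lemma key_up x y s : 0 < x -> x < y -> 0 < s ->
  / Rpower x s - / Rpower y s <= s * (y - x) * / Rpower x (s+1).
Proof.
  intros hx hxy hs. unfold Rpower.
  assert (hy : 0 < y) by lra.
  set (u := s * (ln y - ln x)).
  assert (hu : u <= s * (y / x - 1)).
  { unfold u. apply Rmult_le_compat_l; [lra|]. rewrite <- ln_div by lra.
    apply ln_le_m1. apply Rdiv_lt_0_compat; lra. }
  assert (e1 : exp (s * ln y) = exp (s * ln x) * exp u).
  { rewrite <- exp_plus. f_equal. unfold u; ring. }
  assert (e2 : exp ((s+1) * ln x) = exp (s * ln x) * x).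
  { rewrite <- (exp_ln x) at 3 by lra. rewrite <- exp_plus. f_equal; ring. }
  rewrite e1, e2.
  assert (hP : 0 < exp (s * ln x)) by apply exp_pos.
  assert (hE : 0 < exp u) by apply exp_pos.
  assert (hm : 1 - u <= exp (- u)) by (generalize (exp_ineq1_le (-u)); lra).
  rewrite exp_Ropp in hm.
  set (P := exp (s * ln x)) in *. set (E := exp u) in *.
  assert (h1: / P - / (P * E) = / P * (1 - / E)) by (field; lra).
  rewrite h1.
  assert (h2: s * (y - x) * / (P * x) = / P * (s * (y / x - 1))) by (field; lra).
  rewrite h2. apply Rmult_le_compat_l. left; apply Rinv_0_lt_compat; lra. lra.
Qed.

Lemma key_lo x y s : 0 < x -> x < y -> 0 < s ->
  s * (y - x) * / Rpower y (s+1) <= / Rpower x s - / Rpower y s.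
Proof.
  intros hx hxy hs. unfold Rpower.
  assert (hy : 0 < y) by lra.
  set (u := s * (ln y - ln x)).
  assert (hu : s * (1 - x / y) <= u).
  { unfold u. apply Rmult_le_compat_l; [lra|].
    assert (ln (x/y) <= x / y - 1) by (apply ln_le_m1; apply Rdiv_lt_0_compat; lra).
    rewrite ln_div in H by lra. lra. }
  assert (e1 : exp (s * ln x) = exp (s * ln y) * / exp u).
  { rewrite <- exp_Ropp, <- exp_plus. f_equal. unfold u; ring. }
  assert (e2 : exp ((s+1) * ln y) = exp (s * ln y) * y).
  { rewrite <- (exp_ln y) at 3 by lra. rewrite <- exp_plus. f_equal; ring. }
  rewrite e1, e2.
  assert (hP : 0 < exp (s * ln y)) by apply exp_pos.
  assert (hE : 0 < exp u) by apply exp_pos.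
  assert (hm : 1 + u <= exp u) by apply exp_ineq1_le.
  set (P := exp (s * ln y)) in *. set (E := exp u) in *.
  assert (h1: / (P * / E) - / P = / P * (E - 1)) by (field; lra).
  rewrite h1.
  assert (h2: s * (y - x) * / (P * y) = / P * (s * (1 - x / y))) by (field; lra).
  rewrite h2. apply Rmult_le_compat_l. left; apply Rinv_0_lt_compat; lra. lra.
Qed.
Lemma qbound a b c k : 0 < a -> (1 <= k)%nat -> 0 < qroot a b c k ->
  Rabs (qroot a b c k - sqrt a * INR k) <= (Rabs b + Rabs c) / sqrt a.
Proof.
  intros ha hk hq. unfold qroot in *.
  set (z := a * INR k ^ 2 + b * INR k + c) in *.
  assert (hz : 0 < z).
  { destruct (Rle_lt_dec z 0) as [h|h]; auto. rewrite sqrt_neg_0 in hq; lra. }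
  assert (hkr : 1 <= INR k) by (apply (le_INR 1); auto).
  assert (hsa : 0 < sqrt a) by (apply sqrt_lt_R0; auto).
  assert (hsq : sqrt z * sqrt z = z) by (apply sqrt_sqrt; lra).
  assert (hsa2 : sqrt a * sqrt a = a) by (apply sqrt_sqrt; lra).
  set (q := sqrt z) in *. set (m := sqrt a * INR k).
  assert (hm : 0 < m) by (unfold m; nra).
  assert (e : (q - m) * (q + m) = b * INR k + c).
  { unfold m. replace ((q - sqrt a * INR k) * (q + sqrt a * INR k)) with
      (q * q - (sqrt a * sqrt a) * INR k ^ 2) by ring. rewrite hsq, hsa2. unfold z; ring. }
  assert (hb : Rabs (b * INR k + c) <= (Rabs b + Rabs c) * INR k).
  { eapply Rle_trans. apply Rabs_triang. rewrite Rabs_mult, (Rabs_right (INR k)) by lra.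
    generalize (Rabs_pos c) (Rabs_pos b); intros; assert (Rabs c * 1 <= Rabs c * INR k) by (apply Rmult_le_compat_l; lra); lra. }
  rewrite <- e, Rabs_mult, (Rabs_right (q+m)) in hb by lra.
  apply (Rmult_le_reg_r m); auto.
  assert (Rabs (q - m) * m <= Rabs (q - m) * (q + m)) by (generalize (Rabs_pos (q-m)); nra).
  replace ((Rabs b + Rabs c) / sqrt a * m) with ((Rabs b + Rabs c) * INR k) by (unfold m; field; lra).
  lra.
Qed.

Definition w (s z : R) := / Rpower z s.
Definition Cc (a l s : R) := 2 * l * / Rpower (sqrt a) (s + 1).
Definition Ee (c0 l s : R) := 2 * l * s * / Rpower c0 (s + 1).

Lemma Rpower_pos x y : 0 < Rpower x y.
Proof. unfold Rpower; apply exp_pos. Qed.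

Lemma inv_pow_mono u v p : 0 < u -> u <= v -> 0 <= p -> / Rpower v p <= / Rpower u p.
Proof.
  intros. apply Rinv_le_contravar. apply Rpower_pos. apply Rle_Rpower_l; lra.
Qed.

Lemma term_bounds a l b c c0 K s n : 0 < a -> 0 < l -> 0 < c0 ->
  (forall k : nat, (1 <= k)%nat -> qroot a b c k >= l + c0 * INR k) ->
  (Rabs b + Rabs c) / sqrt a + l <= sqrt a * INR K -> 0 < s ->
  0 <= summand a b c l s (S n) /\
  Cc a l s * (w s (INR n + 1 + INR K) - w s (INR n + 2 + INR K)) <= summand a b c l s (S n) /\
  ((n <= K)%nat -> summand a b c l s (S n) <= Ee c0 l s) /\
  ((K < n)%nat -> summand a b c l s (S n) <= Cc a l s * (w s (INR n - INR K) - w s (INR n + 1 - INR K))).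
Proof.
  intros ha hl hc0 hq hK hs.
  assert (hk1 : (1 <= S n)%nat) by lia.
  assert (hqk := hq _ hk1).
  assert (hkr : 1 <= INR (S n)) by (apply (le_INR 1); auto).
  assert (hsa : 0 < sqrt a) by (apply sqrt_lt_R0; auto).
  assert (hqpos : 0 < qroot a b c (S n)) by nra.
  assert (hB := qbound a b c (S n) ha hk1 hqpos).
  apply Rabs_le_between in hB.
  rewrite S_INR in *.
  set (q := qroot a b c (S n)) in *.
  set (B := (Rabs b + Rabs c) / sqrt a) in *.
  assert (hx : c0 <= q - l) by nra.
  assert (hlo := key_lo (q - l) (q + l) s ltac:(lra) ltac:(lra) hs).
  assert (hup := key_up (q - l) (q + l) s ltac:(lra) ltac:(lra) hs).
  replace (q + l - (q - l)) with (2 * l) in hlo, hup by ring.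
  assert (hs1 : 0 <= s + 1) by lra.
  unfold summand; fold q.
  assert (hKr : 0 <= INR K) by apply pos_INR.
  split; [|split; [|split]].
  - eapply Rle_trans; [|apply hlo]. generalize (Rpower_pos (q+l) (s+1)); intros.
    apply Rmult_le_pos; [nra|]. left; apply Rinv_0_lt_compat; auto.
  - eapply Rle_trans; [|apply hlo].
    set (z := INR n + 1 + INR K).
    assert (hz : 1 <= z) by (unfold z; generalize (pos_INR n); lra).
    assert (hy : q + l <= sqrt a * z) by (unfold z; nra).
    assert (h1 := inv_pow_mono (q + l) (sqrt a * z) (s+1) ltac:(lra) hy hs1).
    rewrite <- Rpower_mult_distr in h1 by lra.
    assert (h2 := key_up z (z + 1) s ltac:(lra) ltac:(lra) hs).
    replace (INR n + 2 + INR K) with (z + 1) by (unfold z; ring).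
    unfold Cc, w.
    rewrite Rinv_mult in h1.
    replace (z + 1 - z) with 1 in h2 by ring.
    generalize (Rpower_pos (sqrt a) (s+1)) (Rpower_pos z (s+1)); intros.
    assert (0 < / Rpower (sqrt a) (s + 1)) by (apply Rinv_0_lt_compat; auto).
    apply Rle_trans with (s * (2 * l) * (/ Rpower (sqrt a) (s + 1) * / Rpower z (s + 1))).
    + replace (s * (2 * l) * (/ Rpower (sqrt a) (s + 1) * / Rpower z (s + 1))) with
        (2 * l * / Rpower (sqrt a) (s + 1) * (s * 1 * / Rpower z (s + 1))) by ring.
      apply Rmult_le_compat_l; [|lra]. apply Rmult_le_pos; lra.
    + apply Rmult_le_compat_l; [nra|]. lra.
  - intros _. eapply Rle_trans; [apply hup|]. unfold Ee.
    assert (h1 := inv_pow_mono c0 (q - l) (s+1) hc0 hx hs1).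
    replace (2 * l * s * / Rpower c0 (s + 1)) with (s * (2 * l) * / Rpower c0 (s + 1)) by ring.
    apply Rmult_le_compat_l; nra.
  - intros hn. eapply Rle_trans; [apply hup|].
    assert (hnK : INR K + 1 <= INR n) by (rewrite <- S_INR; apply le_INR; lia).
    set (z := INR n + 1 - INR K).
    assert (hz : 2 <= z) by (unfold z; lra).
    assert (hy : sqrt a * z <= q - l) by (unfold z; nra).
    assert (h1 := inv_pow_mono (sqrt a * z) (q - l) (s+1) ltac:(nra) hy hs1).
    rewrite <- Rpower_mult_distr in h1 by lra.
    assert (h2 := key_lo (z - 1) z s ltac:(lra) ltac:(lra) hs).
    replace (INR n - INR K) with (z - 1) by (unfold z; ring).
    unfold Cc, w.
    rewrite Rinv_mult in h1.
    replace (z - (z - 1)) with 1 in h2 by ring.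
    generalize (Rpower_pos (sqrt a) (s+1)) (Rpower_pos z (s+1)); intros.
    assert (0 < / Rpower (sqrt a) (s + 1)) by (apply Rinv_0_lt_compat; auto).
    apply Rle_trans with (s * (2 * l) * (/ Rpower (sqrt a) (s + 1) * / Rpower z (s + 1))).
    + apply Rmult_le_compat_l; [nra|]. lra.
    + replace (s * (2 * l) * (/ Rpower (sqrt a) (s + 1) * / Rpower z (s + 1))) with
        (2 * l * / Rpower (sqrt a) (s + 1) * (s * 1 * / Rpower z (s + 1))) by ring.
      apply Rmult_le_compat_l; [|lra]. apply Rmult_le_pos; lra.
Qed.

Lemma w1 s : w s 1 = 1.
Proof. unfold w, Rpower. rewrite ln_1, Rmult_0_r, exp_0. apply Rinv_1. Qed.

Lemma w_pos s z : 0 < w s z.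
Proof. unfold w. apply Rinv_0_lt_compat, Rpower_pos. Qed.

Lemma Cc_pos a l s : 0 < l -> 0 < Cc a l s.
Proof. intros. unfold Cc. generalize (Rpower_pos (sqrt a) (s+1)); intros.
  assert (0 < / Rpower (sqrt a) (s+1)) by (apply Rinv_0_lt_compat; auto). nra. Qed.

Lemma sumS (f : nat -> R) N : sum_n f (S N) = sum_n f N + f (S N).
Proof. rewrite sum_Sn. reflexivity. Qed.

Section S.
Variables (a l b c c0 : R) (K : nat) (s : R).
Hypotheses (ha : 0 < a) (hl : 0 < l) (hc0 : 0 < c0)
  (hq : forall k : nat, (1 <= k)%nat -> qroot a b c k >= l + c0 * INR k)
  (hK : (Rabs b + Rabs c) / sqrt a + l <= sqrt a * INR K) (hs : 0 < s).

Let t := fun n => summand a b c l s (S n).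
Let TB n := term_bounds a l b c c0 K s n ha hl hc0 hq hK hs.

Lemma psum_lo N : Cc a l s * (w s (1 + INR K) - w s (INR N + 2 + INR K)) <= sum_n t N.
Proof.
  induction N.
  - rewrite sum_O. destruct (TB 0) as [_ [h _]]. simpl INR in h.
    unfold t. simpl INR. replace (1 + INR K) with (0 + 1 + INR K) by ring. auto.
  - rewrite sumS. destruct (TB (S N)) as [_ [h _]]. unfold t in *.
    rewrite S_INR in *.
    replace (INR N + 1 + 1 + INR K) with (INR N + 2 + INR K) in h by ring.
    replace (INR N + 1 + 2 + INR K) with (INR N + 1 + 1 + 1 + INR K) in * by ring.
    replace (INR N + 1 + 1 + 1 + INR K) with (INR N + 1 + 2 + INR K) in h |- * by ring.
    lra.
Qed.

Lemma Ee_nonneg : 0 <= Ee c0 l s.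
Proof. unfold Ee. generalize (Rpower_pos c0 (s+1)); intros.
  assert (0 < / Rpower c0 (s+1)) by (apply Rinv_0_lt_compat; auto). repeat apply Rmult_le_pos; lra. Qed.

Lemma psum_up_aux N : ((N <= K)%nat -> sum_n t N <= INR (S N) * Ee c0 l s) /\
  ((K <= N)%nat -> sum_n t N <= INR (S K) * Ee c0 l s + Cc a l s * (1 - w s (INR N + 1 - INR K))).
Proof.
  induction N.
  - rewrite sum_O. destruct (TB 0) as [_ [_ [h _]]]. unfold t.
    split; intros.
    + simpl INR. specialize (h ltac:(lia)). lra.
    + assert (K = 0%nat) by lia. subst K. simpl INR.
      replace (0 + 1 - 0) with 1 by ring. rewrite w1. specialize (h ltac:(lia)). lra.
  - destruct IHN as [IH1 IH2]. rewrite sumS.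
    destruct (TB (S N)) as [_ [_ [h3 h4]]]. unfold t in *.
    split; intros.
    + specialize (IH1 ltac:(lia)). specialize (h3 H). rewrite !S_INR in *. nra.
    + destruct (Nat.eq_dec K (S N)).
      * rewrite <- e. replace (INR K + 1 - INR K) with 1 by ring. rewrite w1.
        specialize (IH1 ltac:(lia)). specialize (h3 ltac:(lia)). rewrite e. rewrite !S_INR in *. nra.
      * specialize (IH2 ltac:(lia)). specialize (h4 ltac:(lia)).
        rewrite !S_INR in *. rewrite !Rmult_minus_distr_l in *. lra.
Qed.



Lemma psum_up N : sum_n t N <= INR (S K) * Ee c0 l s + Cc a l s.
Proof.
  destruct (Compare_dec.le_lt_dec N K) as [h|h].
  - destruct (psum_up_aux N) as [h1 _]. specialize (h1 h).
    assert (INR (S N) <= INR (S K)) by (apply le_INR; lia).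
    generalize Ee_nonneg (Cc_pos a l s hl); intros. nra.
  - destruct (psum_up_aux N) as [_ h2]. specialize (h2 ltac:(lia)).
    generalize (w_pos s (INR N + 1 - INR K)) (Cc_pos a l s hl); intros. nra.
Qed.

End S.

Lemma w_lim s c : 0 < s -> 0 < c -> is_lim_seq (fun N => w s (INR N + c)) 0.
Proof.
  intros hs hc. apply is_lim_seq_spec. intros eps.
  destruct (INR_unbounded (exp (- ln eps / s))) as [N0 hN0].
  exists N0. intros n hn. rewrite Rminus_0_r.
  generalize (w_pos s (INR n + c)); intros hp. rewrite Rabs_right by lra.
  assert (INR N0 <= INR n) by (apply le_INR; auto).
  unfold w, Rpower. rewrite <- exp_Ropp.
  rewrite <- (exp_ln eps) by apply cond_pos.
  apply exp_increasing.
  assert (h : - ln eps / s < ln (INR n + c)).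
  { rewrite <- (ln_exp (- ln eps / s)). apply ln_increasing. apply exp_pos. lra. }
  assert (h2 : - ln eps < s * ln (INR n + c)).
  { apply (Rmult_lt_compat_l s) in h; auto. replace (s * (- ln eps / s)) with (- ln eps) in h by (field; lra). auto. }
  lra.
Qed.

Lemma series_facts a l b c c0 K s : 0 < a -> 0 < l -> 0 < c0 ->
  (forall k : nat, (1 <= k)%nat -> qroot a b c k >= l + c0 * INR k) ->
  (Rabs b + Rabs c) / sqrt a + l <= sqrt a * INR K -> 0 < s ->
  ex_series (fun n => summand a b c l s (S n)) /\
  Cc a l s * w s (1 + INR K) <= Series (fun n => summand a b c l s (S n)) <=
  INR (S K) * Ee c0 l s + Cc a l s.
Proof.
  intros ha hl hc0 hq hK hs.
  set (t := fun n => summand a b c l s (S n)).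
  assert (hex : ex_finite_lim_seq (sum_n t)).
  { apply ex_finite_lim_seq_incr with (INR (S K) * Ee c0 l s + Cc a l s).
    - intros n. rewrite sumS. destruct (term_bounds a l b c c0 K s (S n) ha hl hc0 hq hK hs) as [h _].
      unfold t; lra.
    - intros n. apply (psum_up a l b c c0 K s ha hl hc0 hq hK hs). }
  destruct hex as [L hL].
  assert (hser : is_series t L) by exact hL.
  rewrite (is_series_unique t L hser).
  split; [exists L; exact hser|]. split.
  - assert (hlo : is_lim_seq (fun N => Cc a l s * (w s (1 + INR K) - w s (INR N + (2 + INR K))))
                     (Cc a l s * (w s (1 + INR K) - 0))).
    { apply is_lim_seq_mult'. apply is_lim_seq_const. apply is_lim_seq_minus'. apply is_lim_seq_const.
      apply w_lim; auto. generalize (pos_INR K); lra. }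
    rewrite Rminus_0_r in hlo.
    assert (hlo' : is_lim_seq (fun N => Cc a l s * (w s (1 + INR K) - w s (INR N + 2 + INR K)))
                     (Cc a l s * w s (1 + INR K))).
    { eapply is_lim_seq_ext; [|exact hlo]. intros N; simpl. f_equal. f_equal. f_equal. ring. }
    exact (is_lim_seq_le _ _ _ _ (fun N => psum_lo a l b c c0 K s ha hl hc0 hq hK hs N) hlo' hL).
  - exact (is_lim_seq_le _ _ _ _ (fun N => psum_up a l b c c0 K s ha hl hc0 hq hK hs N) hL
      (is_lim_seq_const _)).
Qed.

Lemma cont_lim (f : R -> R) (L : R) : (forall x, ex_derive f x) -> f 0 = L ->
  filterlim f (at_right 0) (Rbar_locally L).
Proof.
  intros hd h0. subst L.
  apply (filterlim_filter_le_1 (F := locally 0)).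
  - intros P [d H]. exists d. intros y hy _. apply H, hy.
  - apply (ex_derive_continuous f 0 (hd 0)).
Qed.

Theorem mainTheorem13 (a l b c : R) (ha : 0 < a) (hl : 0 < l)
  (hc0 : exists c0 : R, 0 < c0 /\
     forall k : nat, (1 <= k)%nat -> qroot a b c k >= l + c0 * INR k) :
  (forall s : R, 0 < s -> ex_series (fun n : nat => summand a b c l s (S n))) /\
  filterlim (fun s : R => Series (fun n : nat => summand a b c l s (S n)))
    (at_right 0) (locally (2 * l / sqrt a)).
Proof.
  destruct hc0 as [c0 [hc0 hq]].
  assert (hsa : 0 < sqrt a) by (apply sqrt_lt_R0; auto).
  destruct (INR_unbounded (((Rabs b + Rabs c) / sqrt a + l) / sqrt a)) as [K hK].
  assert (hK' : (Rabs b + Rabs c) / sqrt a + l <= sqrt a * INR K).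
  { apply Rgt_lt in hK. apply (Rmult_lt_compat_l (sqrt a)) in hK; auto.
    replace (sqrt a * (((Rabs b + Rabs c) / sqrt a + l) / sqrt a)) with
      ((Rabs b + Rabs c) / sqrt a + l) in hK by (field; lra). lra. }
  split.
  - intros s hs. apply (series_facts a l b c c0 K s ha hl hc0 hq hK' hs).
  - apply (filterlim_le_le (F := at_right 0)
      (fun s => Cc a l s * w s (1 + INR K)) _
      (fun s => INR (S K) * Ee c0 l s + Cc a l s) (Finite (2 * l / sqrt a))).
    + exists (mkposreal 1 Rlt_0_1). intros y _ hy.
      apply (series_facts a l b c c0 K y ha hl hc0 hq hK' hy).
    + apply cont_lim.
      * intros x. unfold Cc, w, Rpower. auto_derive. repeat split; apply Rgt_not_eq, exp_pos.
      * unfold Cc, w, Rpower. rewrite Rmult_0_l, exp_0, Rplus_0_l, Rmult_1_l, exp_ln by auto.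
        rewrite ?exp_ln by auto. unfold Rdiv. rewrite ?Rinv_1. ring.
    + apply cont_lim.
      * intros x. unfold Cc, Ee, w, Rpower. auto_derive. repeat split; apply Rgt_not_eq, exp_pos.
      * unfold Cc, Ee, w, Rpower. rewrite Rplus_0_l, !Rmult_1_l, exp_ln by auto.
        rewrite ?exp_ln by auto. unfold Rdiv. rewrite ?Rinv_1. ring.
Qed.
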